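(* Let $1\le k<n$. Every RYD in $\mathbb{Y}_{OG(k,2n+1)}$ is a $W^{OG(k,2n+1)}$-diagram, i.e. $\mathbb{Y}_{OG(k,2n+1)}\subseteq\Theta(k,2n+1)$.
   Context: Root system $B_n$: positive roots $e_a\pm e_b$ ($a<b$), $e_a$; simple roots $e_i-e_{i+1}$ ($i<n$), $e_n$; order $\alpha\le\beta$ iff $\beta-\alpha$ is a nonnegative integer combination of simple roots. $W^{OG(k,2n+1)}$ is the set of signed permutations $w=(y_1,\dots,y_{k-r},\overline{z_r},\dots,\overline{z_1},v_1,\dots,v_{n-k})$ of $1,\dots,n$ (bars = negative entries) with $0\le r\le k$, $y_1<\dots<y_{k-r}$, $z_r>\dots>z_1$, $v_1<\dots<v_{n-k}$, acting by $e_a\mapsto\pm e_{|w(a)|}$ (minus if barred); $\mathrm{Inv}(w)$ is the set of positive roots sent to negative roots, and $\mathbb{Y}_{OG(k,2n+1)}=\{\mathrm{Inv}(w)\}$. The base region is the set of roots $e_a\pm e_b$ ($a\le k<b$) and $e_a$ ($a\le k$); its $i$-th row ($1\le i\le k$) consists of $e_{k+1-i}\pm e_b$ ($b>k$) and $e_{k+1-i}$. The top region is the set of roots $e_a+e_b$ with $a<b\le k$. Both regions are subposets. A subset $S$ of the union of the two regions is a $W^{OG(k,2n+1)}$-diagram if $S$ meets each region in a lower order ideal of that region and satisfies the support condition: for each top-region root $e_a+e_b$ ($a<b\le k$), if $S$ contains more than $2n+1-2k$ roots of the base rows indexed by $a$ and $b$ (i.e. rows $k+1-a$ and $k+1-b$)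 combined, then $e_a+e_b\in S$, and if it contains fewer than $2n+1-2k$ such roots then $e_a+e_b\notin S$. $\Theta(k,2n+1)$ is the set of these diagrams. *)

(* Defs.v *)
From HB Require Import structures.
From mathcomp Require Import all_boot all_order all_algebra.
Unset Printing Implicit Defensive.
Import Order.TTheory GRing.Theory Num.Theory.
Local Open Scope ring_scope.

(* Vectors of R^n with integer coordinates; coordinate i : 'I_n is e_{i+1}. *)
Notation vec n := {ffun 'I_n -> int}.

Definition e (n a : nat) : vec n := [ffun i : 'I_n => ((i.+1 == a) : nat)%:Z].

Definition pos_roots (n : nat) : seq (vec n) :=
  [seq e n a - e n b | a <- iota 1 n, b <- iota a.+1 (n - a)] ++
  [seq e n a + e n b | a <- iota 1 n, b <- iota a.+1 (n - a)] ++
  [seq e n a | a <- iota 1 n].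

Definition simple_root (n i : nat) : vec n :=
  if (i < n)%N then e n i - e n i.+1 else e n n.

Definition root_le (n : nat) (al be : vec n) : Prop :=
  exists c : 'I_n -> nat, be - al = \sum_(i < n) simple_root n i.+1 *+ c i.

(* Signed permutations are sequences w = (w(1),...,w(n)) of nonzero integers,
   a negative entry being a barred one. *)
Definition signed_perm (n : nat) (w : seq int) : Prop :=
  size w = n /\ perm_eq (map absz w) (iota 1 n).

(* W^{OG(k,2n+1)}: w = (y_1..y_{k-r}, zbar_r..zbar_1, v_1..v_{n-k}). *)
Definition in_W_OG (n k : nat) (w : seq int) : Prop :=
  signed_perm n w /\
  exists r : nat, (r <= k)%N /\
    let y := take (k - r) w in
    let z := take r (drop (k - r) w) in
    let v := drop k w in
    [/\ all (fun x => 0 < x) y /\ sorted (fun x x' => x < x') y,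
        all (fun x => x < 0) z /\ sorted (fun x x' : int => (absz x' < absz x)%N) z &
        all (fun x => 0 < x) v /\ sorted (fun x x' => x < x') v].

Definition act (n : nat) (w : seq int) (al : vec n) : vec n :=
  \sum_(i < n) e n (absz (nth 0 w i)) *~ (al i * sgz (nth 0 w i)).

Definition Inv (n : nat) (w : seq int) (al : vec n) : bool :=
  (al \in pos_roots n) && (- act n w al \in pos_roots n).

Definition base_region (n k : nat) : seq (vec n) :=
  [seq e n a - e n b | a <- iota 1 k, b <- iota k.+1 (n - k)] ++
  [seq e n a + e n b | a <- iota 1 k, b <- iota k.+1 (n - k)] ++
  [seq e n a | a <- iota 1 k].

Definition base_row (n k i : nat) : seq (vec n) :=
  [seq e n (k.+1 - i) - e n b | b <- iota k.+1 (n - k)] ++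
  [seq e n (k.+1 - i) + e n b | b <- iota k.+1 (n - k)] ++
  [:: e n (k.+1 - i)].

Definition top_region (n k : nat) : seq (vec n) :=
  [seq e n a + e n b | a <- iota 1 k, b <- iota a.+1 (k - a)].

Definition lower_ideal_in (n : nat) (R : seq (vec n)) (S : vec n -> bool) : Prop :=
  forall al be, al \in R -> be \in R -> root_le n al be -> S be -> S al.

Definition W_OG_diagram (n k : nat) (S : vec n -> bool) : Prop :=
  [/\ (forall al, S al -> (al \in base_region n k) || (al \in top_region n k)),
      lower_ideal_in n (base_region n k) S,
      lower_ideal_in n (top_region n k) S &
      forall a b : nat, (1 <= a)%N -> (a < b)%N -> (b <= k)%N ->
        let c := (count S (base_row n k (k.+1 - a)) +
                  count S (base_row n k (k.+1 - b)))%N in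
        ((2 * n + 1 - 2 * k < c)%N -> S (e n a + e n b)) /\
        ((c < 2 * n + 1 - 2 * k)%N -> ~~ S (e n a + e n b))].

(* Main.v *)
Require Import Defs.
From mathcomp Require Import all_boot all_order all_algebra.
From mathcomp Require Import zify.
Import Order.TTheory GRing.Theory Num.Theory.
Local Open Scope ring_scope.

Lemma eE n a (i : 'I_n) : e n a i = ((i.+1 == a) : nat)%:Z.
Proof. by rewrite ffunE. Qed.

Definition lead_pos n (v : vec n) :=
  exists i : 'I_n, 0 < v i /\ forall j : 'I_n, (j < i)%N -> v j = 0.
Arguments lead_pos {n}.

Lemma lead_es n a b (s : int) : (1 <= a)%N -> (a < b)%N -> (a <= n)%N ->
  lead_pos (e n a + e n b *~ s).
Proof.
move=> h1 hab han.
have hi : (a.-1 < n)%N by lia.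
exists (Ordinal hi); split.
  rewrite !(ffunMzE, ffunE) /=.
  have -> : (a.-1.+1 == a) = true by apply/eqP; lia.
  have -> : (a.-1.+1 == b) = false by apply/eqP; lia.
  by rewrite mul0rz addr0.
move=> j /= hj; rewrite !(ffunMzE, ffunE).
have -> : (j.+1 == a) = false by apply/eqP; lia.
have -> : (j.+1 == b) = false by apply/eqP; lia.
by rewrite mul0rz addr0.
Qed.

Lemma lead_neg n (v : vec n) : lead_pos v -> lead_pos (- v) -> False.
Proof.
move=> [i [hi hi']] [j [hj hj']].
case: (ltngtP i j) => h.
- by move: (hj' _ h); rewrite ffunE => /eqP; rewrite oppr_eq0 => /eqP hv; move: hi; rewrite hv.
- by move: (hi' _ h) hj; rewrite ffunE => ->; rewrite oppr0.
- have eij : i = j by apply: val_inj.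
  by move: hj; rewrite ffunE -eij oppr_gt0 => hh; move: (lt_trans hh hi); rewrite ltxx.
Qed.

Lemma pos_lead n v : v \in pos_roots n -> lead_pos v.
Proof.
rewrite !mem_cat => /or3P [/allpairsPdep [a [b [ha hb ->]]]
                         | /allpairsPdep [a [b [ha hb ->]]] | /mapP [a ha ->]].
- move: ha hb; rewrite !mem_iota => ha hb.
  by rewrite -mulrN1z; apply: lead_es; lia.
- move: ha hb; rewrite !mem_iota => ha hb.
  by rewrite -[e n b]mulr1z; apply: lead_es; lia.
- move: ha; rewrite !mem_iota => ha.
  have -> : e n a = e n a + e n a.+1 *~ 0 by rewrite mulr0z addr0.
  apply: lead_es; lia.
Qed.

Lemma pos_not_neg n v : v \in pos_roots n -> - v \in pos_roots n -> False.
Proof. by move=> /pos_lead h1 /pos_lead h2; apply: lead_neg h1 h2. Qed.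

Lemma mem_pos_e n a : (1 <= a <= n)%N -> e n a \in pos_roots n.
Proof.
move=> h; rewrite !mem_cat; apply/orP; right; apply/orP; right.
by apply/mapP; exists a => //; rewrite mem_iota; lia.
Qed.

Lemma mem_pos_m n a b : (1 <= a)%N -> (a < b <= n)%N -> e n a - e n b \in pos_roots n.
Proof.
move=> h1 h; rewrite !mem_cat; apply/orP; left.
by apply/allpairsPdep; exists a, b; rewrite !mem_iota; split => //; lia.
Qed.

Lemma mem_pos_p n a b : (1 <= a)%N -> (a < b <= n)%N -> e n a + e n b \in pos_roots n.
Proof.
move=> h1 h; rewrite !mem_cat; apply/orP; right; apply/orP; left.
by apply/allpairsPdep; exists a, b; rewrite !mem_iota; split => //; lia.
Qed.

Definition sv n (p : int) : vec n := e n (absz p) *~ sgz p.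
Definition spos (p q : int) : bool := if (absz p < absz q)%N then 0 < p else 0 < q.

Lemma sv_opp n p : sv n (- p) = - sv n p.
Proof. by rewrite /sv abszN sgzN mulrNz. Qed.

Lemma sv_pos n p : 0 < p -> sv n p = e n (absz p).
Proof. by move=> h; rewrite /sv gtr0_sgz // mulr1z. Qed.

Lemma sv_neg n p : p < 0 -> sv n p = - e n (absz p).
Proof. by move=> h; rewrite /sv ltr0_sgz // mulrN1z. Qed.

Lemma mem_e_sv n a q : (1 <= a)%N -> (a < absz q <= n)%N -> e n a + sv n q \in pos_roots n.
Proof.
move=> h1 h2; have [hq|hq|hq] := ltgtP q 0.
- by rewrite sv_neg //; apply: mem_pos_m.
- by rewrite sv_pos //; apply: mem_pos_p.
- by move: h2; rewrite hq; lia.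
Qed.

Lemma sv2 n p q : (1 <= absz p <= n)%N -> (1 <= absz q <= n)%N -> absz p != absz q ->
  (sv n p + sv n q \in pos_roots n) = spos p q.
Proof.
wlog h : p q / (absz p < absz q)%N.
  move=> H hp hq hpq; case: (ltngtP (absz p) (absz q)) => h.
  - by apply: H.
  - rewrite addrC H //; last by rewrite eq_sym.
    rewrite /spos h; have -> : (absz p < absz q)%N = false by lia.
    done.
  - by move: hpq; rewrite h eqxx.
move=> hp hq hpq; rewrite /spos h.
have [hp0|hp0|hp0] := ltgtP p 0.
- rewrite sv_neg // -(opprK (sv n q)) -sv_opp -opprD.
  apply/negbTE/negP => H; apply: (pos_not_neg _ _ _ H).
  by apply: mem_e_sv; rewrite ?abszN; lia.
- by rewrite sv_pos //; apply: mem_e_sv; lia.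
- by move: hp; rewrite hp0.
Qed.

Lemma sv1 n p : (1 <= absz p <= n)%N -> (sv n p \in pos_roots n) = (0 < p).
Proof.
move=> hp; have [hp0|hp0|hp0] := ltgtP p 0.
- rewrite sv_neg //; apply/negbTE/negP => H; apply: (pos_not_neg _ _ _ H).
  by apply: mem_pos_e.
- by rewrite sv_pos //; apply: mem_pos_e.
- by move: hp; rewrite hp0.
Qed.

Lemma act_add n w al be : act n w (al + be) = act n w al + act n w be.
Proof.
rewrite /act -big_split; apply: eq_bigr => i _.
by rewrite ffunE mulrDl mulrzDr.
Qed.

Lemma act_opp n w al : act n w (- al) = - act n w al.
Proof.
rewrite /act -sumrN; apply: eq_bigr => i _.
by rewrite ffunE mulNr mulrNz.
Qed.

Lemma act_e n w a : (1 <= a <= n)%N -> act n w (e n a) = sv n (nth 0 w a.-1).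
Proof.
move=> ha; have hi : (a.-1 < n)%N by lia.
rewrite /act (bigD1 (Ordinal hi)) //= big1 ?addr0.
  rewrite eE /=; have -> : (a.-1.+1 == a) = true by apply/eqP; lia.
  by rewrite mul1r.
move=> j hj; rewrite eE.
have -> : (j.+1 == a) = false.
  apply/eqP => hja; move/eqP: hj; apply; apply: val_inj => /=; lia.
by rewrite mul0r mulr0z.
Qed.

Lemma Inv_e n (w : seq int) a : (1 <= a <= n)%N -> (1 <= absz (nth 0%R w a.-1) <= n)%N ->
  Inv n w (e n a) = (nth 0 w a.-1 < 0).
Proof.
move=> ha hx; rewrite /Inv mem_pos_e // act_e // -sv_opp sv1 ?abszN //.
by rewrite oppr_gt0.
Qed.

Lemma Inv_m n (w : seq int) a b : (1 <= a)%N -> (a < b <= n)%N ->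
  (1 <= absz (nth 0%R w a.-1) <= n)%N -> (1 <= absz (nth 0%R w b.-1) <= n)%N ->
  absz (nth 0%R w a.-1) != absz (nth 0%R w b.-1) ->
  Inv n w (e n a - e n b) = spos (- nth 0 w a.-1) (nth 0 w b.-1).
Proof.
move=> ha hb hxa hxb hd; rewrite /Inv mem_pos_m // act_add act_opp !act_e; try lia.
by rewrite opprD opprK -sv_opp sv2 ?abszN.
Qed.

Lemma Inv_p n (w : seq int) a b : (1 <= a)%N -> (a < b <= n)%N ->
  (1 <= absz (nth 0%R w a.-1) <= n)%N -> (1 <= absz (nth 0%R w b.-1) <= n)%N ->
  absz (nth 0%R w a.-1) != absz (nth 0%R w b.-1) ->
  Inv n w (e n a + e n b) = spos (- nth 0 w a.-1) (- nth 0 w b.-1).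
Proof.
move=> ha hb hxa hxb hd; rewrite /Inv mem_pos_p // act_add !act_e; try lia.
by rewrite opprD -!sv_opp sv2 ?abszN.
Qed.

Record WF (n k r : nat) (x : nat -> int) : Prop := {
 wf_abs : forall i, (1 <= i <= n)%N -> (1 <= absz (x i) <= n)%N;
 wf_dist : forall i j, (1 <= i <= n)%N -> (1 <= j <= n)%N -> i != j -> absz (x i) != absz (x j);
 wf_Y : forall i, (1 <= i <= k - r)%N -> 0 < x i;
 wf_Z : forall i, (k - r < i <= k)%N -> x i < 0;
 wf_V : forall i, (k < i <= n)%N -> 0 < x i;
 wf_Ym : forall i j, (1 <= i)%N -> (i < j)%N -> (j <= k - r)%N -> x i < x j;
 wf_Zm : forall i j, (k - r < i)%N -> (i < j)%N -> (j <= k)%N -> (absz (x j) < absz (x i))%N;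
 wf_Vm : forall i j, (k < i)%N -> (i < j)%N -> (j <= n)%N -> x i < x j }.

Lemma W_WF n k (w : seq int) : (k <= n)%N -> in_W_OG n k w ->
  exists r, (r <= k)%N /\ WF n k r (fun i => nth 0 w i.-1).
Proof.
move=> hkn [[hs hp] [r [hr /= [[yA yS] [zA zS] [vA vS]]]]].
have xY i : (i < k - r)%N -> nth 0 w i = nth 0 (take (k - r) w) i.
  by move=> h; rewrite nth_take.
have xZ i : (k - r <= i < k)%N -> nth 0 w i = nth 0 (take r (drop (k - r) w)) (i - (k - r)).
  by move=> h; rewrite nth_take ?nth_drop; [congr nth; lia | lia].
have xV i : (k <= i)%N -> nth 0 w i = nth 0 (drop k w) (i - k).
  by move=> h; rewrite nth_drop; congr nth; lia.
have szY : size (take (k - r) w) = (k - r)%N by rewrite size_takel // hs; lia.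
have szZ : size (take r (drop (k - r) w)) = r by rewrite size_takel // size_drop hs; lia.
have szV : size (drop k w) = (n - k)%N by rewrite size_drop hs.
have habs i : (1 <= i <= n)%N -> absz (nth 0%R w i.-1) = nth 0%N (map absz w) i.-1.
  by move=> h; rewrite (nth_map 0) // hs; lia.
exists r; split => //; split.
- move=> i hi; rewrite habs //.
  have : nth 0%N (map absz w) i.-1 \in iota 1 n.
    by rewrite -(perm_mem hp); apply: mem_nth; rewrite size_map hs; lia.
  by rewrite mem_iota; lia.
- move=> i j hi hj hij; rewrite !habs //.
  have hu : uniq (map absz w) by rewrite (perm_uniq hp) iota_uniq.
  rewrite nth_uniq ?size_map ?hs //; lia.
- move=> i hi; rewrite xY; last lia.
  by apply: (allP yA); apply: mem_nth; rewrite szY; lia.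
- move=> i hi; rewrite xZ; last lia.
  by apply: (allP zA); apply: mem_nth; rewrite szZ; lia.
- move=> i hi; rewrite xV; last lia.
  by apply: (allP vA); apply: mem_nth; rewrite szV; lia.
- move=> i j hi hij hj; rewrite !xY; try lia.
  apply: (sorted_ltn_nth lt_trans 0 yS); rewrite ?inE ?szY /=; lia.
- move=> i j hi hij hj; rewrite !xZ; try lia.
  have tr : transitive (fun x x' : int => (absz x' < absz x)%N).
    by move=> a b c h1 h2 /=; lia.
  apply: (sorted_ltn_nth tr 0 zS); rewrite ?inE ?szZ /=; lia.
- move=> i j hi hij hj; rewrite !xV; try lia.
  apply: (sorted_ltn_nth lt_trans 0 vS); rewrite ?inE ?szV /=; lia.
Qed.

Definition P n (m : nat) (v : vec n) : int := \sum_(i < n | (i < m)%N) v i.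

Lemma P_add n m u v : P n m (u + v) = P n m u + P n m v.
Proof. by rewrite /P -big_split; apply: eq_bigr => i _; rewrite ffunE. Qed.

Lemma P_opp n m v : P n m (- v) = - P n m v.
Proof. by rewrite /P -sumrN; apply: eq_bigr => i _; rewrite ffunE. Qed.

Lemma P_e n m a : (1 <= a <= n)%N -> P n m (e n a) = ((a <= m)%N : nat)%:Z.
Proof.
move=> ha; have hi : (a.-1 < n)%N by lia.
rewrite /P; case: (leqP a m) => ham.
  rewrite (bigD1 (Ordinal hi)) /=; last lia.
  rewrite big1 ?addr0; first by rewrite eE /=; have -> : (a.-1.+1 == a) = true by apply/eqP; lia.
  move=> j /andP [_ hj]; rewrite eE.
  have -> : (j.+1 == a) = false.
    apply/eqP => hja; move/eqP: hj; apply; apply: val_inj => /=; lia.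
  by [].
rewrite big1 // => j hj; rewrite eE.
by have -> : (j.+1 == a) = false by apply/eqP; lia.
Qed.

Lemma P_sr n m i : (1 <= i <= n)%N -> 0 <= P n m (simple_root n i).
Proof.
move=> hi; rewrite /simple_root; case: ifP => h.
  rewrite P_add P_opp !P_e; lia.
by rewrite P_e //; lia.
Qed.

Lemma root_le_P n al be : root_le n al be -> forall m, P n m al <= P n m be.
Proof.
move=> [c hc] m; rewrite -subr_ge0 -P_opp -P_add hc.
rewrite /P; rewrite (eq_bigr (fun j => \sum_(i < n) (simple_root n i.+1 j *+ c i))); last first.
  by move=> j _; rewrite sum_ffunE; apply: eq_bigr => i _; rewrite ffunMnE.
rewrite exchange_big /=; apply: sumr_ge0 => i _.
rewrite sumrMnl; apply: mulrn_wge0.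
by apply: P_sr; rewrite ltn_ord.
Qed.
Arguments wf_abs {n k r x}.
Arguments wf_dist {n k r x}.
Arguments wf_Y {n k r x}.
Arguments wf_Z {n k r x}.
Arguments wf_V {n k r x}.
Arguments wf_Ym {n k r x}.
Arguments wf_Zm {n k r x}.
Arguments wf_Vm {n k r x}.
Ltac side hw := first [ lia | (apply: (wf_abs hw); lia) | (apply: (wf_dist hw); lia) ].

Lemma spos_nn p q : p < 0 -> q < 0 -> spos p q = false.
Proof. by move=> hp hq; rewrite /spos; case: ifP => _; apply/negbTE; rewrite -leNgt ltW. Qed.
Lemma spos_pp p q : 0 < p -> 0 < q -> spos p q = true.
Proof. by move=> hp hq; rewrite /spos; case: ifP. Qed.
Lemma spos_pn p q : 0 < p -> q < 0 -> spos p q = (absz p < absz q)%N.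
Proof. move=> hp hq; rewrite /spos; case: ifP => _; first by rewrite hp.
by apply/negbTE; rewrite -leNgt ltW. Qed.
Lemma spos_np p q : p < 0 -> 0 < q -> spos p q = ~~ (absz p < absz q)%N.
Proof. move=> hp hq; rewrite /spos; case: ifP => _ /=; last by rewrite hq.
by apply/negbTE; rewrite -leNgt ltW. Qed.

Lemma abs_lt_pos (p q : int) : 0 < p -> 0 < q -> p < q -> (absz p < absz q)%N.
Proof. by case: p => // p; case: q => // q _ _; rewrite ltz_nat. Qed.

Lemma part1 n k r (w : seq int) : (1 <= k)%N -> (k < n)%N -> (r <= k)%N ->
  WF n k r (fun i => nth 0 w i.-1) -> forall al,
  Inv n w al -> (al \in base_region n k) || (al \in top_region n k).
Proof.
move=> hk1 hkn hr hw al hI; have := hI; rewrite /Inv => /andP [hp _].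
rewrite /pos_roots !mem_cat in hp; move: hp => /or3P [/allpairsPdep [a [b [ha hb E]]]
        | /allpairsPdep [a [b [ha hb E]]] | /mapP [a ha E]]; subst al.
- move: ha hb; rewrite !mem_iota => ha hb.
  case: (leqP a k) => hak; case: (leqP b k) => hbk.
  + exfalso; move: hI; rewrite Inv_m; try side hw.
    case: (leqP b (k - r)) => hbY.
      have xa : 0 < nth 0 w a.-1 by apply: (wf_Y hw); lia.
      have xb : 0 < nth 0 w b.-1 by apply: (wf_Y hw); lia.
      rewrite spos_np ?oppr_lt0 // abszN abs_lt_pos //.
      by apply: (wf_Ym hw); lia.
    have xb : nth 0 w b.-1 < 0 by apply: (wf_Z hw); lia.
    case: (leqP a (k - r)) => haY.
      have xa : 0 < nth 0 w a.-1 by apply: (wf_Y hw); lia.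
      by rewrite spos_nn ?oppr_lt0.
    have xa : nth 0 w a.-1 < 0 by apply: (wf_Z hw); lia.
    rewrite spos_pn ?oppr_gt0 // abszN ltnNge ltnW //.
    by apply: (wf_Zm hw); lia.
  + apply/orP; left; rewrite /base_region !mem_cat; apply/orP; left.
    by apply/allpairsPdep; exists a, b; rewrite !mem_iota; split => //; lia.
  + lia.
  + exfalso; move: hI; rewrite Inv_m; try side hw.
    have xa : 0 < nth 0 w a.-1 by apply: (wf_V hw); lia.
    have xb : 0 < nth 0 w b.-1 by apply: (wf_V hw); lia.
    rewrite spos_np ?oppr_lt0 // abszN abs_lt_pos //.
    by apply: (wf_Vm hw); lia.
- move: ha hb; rewrite !mem_iota => ha hb.
  case: (leqP a k) => hak; case: (leqP b k) => hbk.
  + apply/orP; right; rewrite /top_region.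
    by apply/allpairsPdep; exists a, b; rewrite !mem_iota; split => //; lia.
  + apply/orP; left; rewrite /base_region !mem_cat; apply/orP; right; apply/orP; left.
    by apply/allpairsPdep; exists a, b; rewrite !mem_iota; split => //; lia.
  + lia.
  + exfalso; move: hI; rewrite Inv_p; try side hw.
    have xa : 0 < nth 0 w a.-1 by apply: (wf_V hw); lia.
    have xb : 0 < nth 0 w b.-1 by apply: (wf_V hw); lia.
    by rewrite spos_nn ?oppr_lt0.
- move: ha; rewrite !mem_iota => ha.
  case: (leqP a k) => hak.
  + apply/orP; left; rewrite /base_region !mem_cat; apply/orP; right; apply/orP; right.
    by apply/mapP; exists a => //; rewrite mem_iota; lia.
  + exfalso; move: hI; rewrite Inv_e; try side hw.
    have xa : 0 < nth 0 w a.-1 by apply: (wf_V hw); lia.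
    by rewrite ltNge ltW.
Qed.

Lemma cnt_cover (s : seq nat) (p q : pred nat) :
  (forall v, v \in s -> p v || q v) -> (size s <= count p s + count q s)%N.
Proof.
move=> h; rewrite -count_predUI.
rewrite (@eq_in_count _ _ predT) ?count_predT.
  by rewrite leq_addr.
by move=> v hv /=; rewrite h.
Qed.

Lemma cnt_disj (s : seq nat) (p q : pred nat) :
  (forall v, v \in s -> ~~ (p v && q v)) -> (count p s + count q s <= size s)%N.
Proof.
move=> h; rewrite -count_predUI.
rewrite (@eq_in_count _ (predI p q) pred0) ?count_pred0 ?addn0 ?count_size //.
by move=> v hv /=; apply/negbTE/h.
Qed.

Lemma rowY n k r (w : seq int) a : (1 <= k)%N -> (k < n)%N -> (r <= k)%N ->
  WF n k r (fun i => nth 0 w i.-1) -> (1 <= a <= k - r)%N ->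
  count (Inv n w) (base_row n k (k.+1 - a)) =
  count (fun v => absz (nth 0%R w v.-1) < absz (nth 0%R w a.-1))%N (iota k.+1 (n - k)).
Proof.
move=> hk1 hkn hr hw ha; rewrite /base_row.
have -> : (k.+1 - (k.+1 - a))%N = a by lia.
have xa : 0 < nth 0 w a.-1 by apply: (wf_Y hw); lia.
rewrite !count_cat.
have -> : count (Inv n w) [seq e n a + e n b | b <- iota k.+1 (n - k)] = 0%N.
  rewrite count_map (@eq_in_count _ _ pred0) ?count_pred0 // => v.
  rewrite mem_iota => hv /=; rewrite Inv_p; try side hw.
  have xv : 0 < nth 0 w v.-1 by apply: (wf_V hw); lia.
  by rewrite spos_nn ?oppr_lt0.
have -> : count (Inv n w) [:: e n a] = 0%N.
  rewrite /= Inv_e; try side hw.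
rewrite !addn0 count_map; apply: eq_in_count => v; rewrite mem_iota => hv /=.
rewrite Inv_m; try side hw.
have xv : 0 < nth 0 w v.-1 by apply: (wf_V hw); lia.
rewrite spos_np ?oppr_lt0 // abszN -leqNgt leq_eqVlt.
have hd : (absz (nth 0%R w v.-1) == absz (nth 0%R w a.-1)) = false.
  by apply/negbTE/(wf_dist hw); lia.
by rewrite hd.
Qed.

Lemma rowZ n k r (w : seq int) a : (1 <= k)%N -> (k < n)%N -> (r <= k)%N ->
  WF n k r (fun i => nth 0 w i.-1) -> (k - r < a <= k)%N ->
  count (Inv n w) (base_row n k (k.+1 - a)) =
  ((n - k) + count (fun v => absz (nth 0%R w a.-1) < absz (nth 0%R w v.-1))%N (iota k.+1 (n - k)) + 1)%N.
Proof.
move=> hk1 hkn hr hw ha; rewrite /base_row.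
have -> : (k.+1 - (k.+1 - a))%N = a by lia.
have xa : nth 0 w a.-1 < 0 by apply: (wf_Z hw); lia.
rewrite !count_cat.
have -> : count (Inv n w) [seq e n a - e n b | b <- iota k.+1 (n - k)] = (n - k)%N.
  rewrite count_map (@eq_in_count _ _ predT) ?count_predT ?size_iota // => v.
  rewrite mem_iota => hv /=; rewrite Inv_m; try side hw.
  have xv : 0 < nth 0 w v.-1 by apply: (wf_V hw); lia.
  by rewrite spos_pp ?oppr_gt0.
have -> : count (Inv n w) [:: e n a] = 1%N.
  by rewrite /= Inv_e ?xa; try side hw.
rewrite addnA; congr (_ + _ + _)%N.
rewrite count_map; apply: eq_in_count => v; rewrite mem_iota => hv /=.
rewrite Inv_p; try side hw.
have xv : 0 < nth 0 w v.-1 by apply: (wf_V hw); lia.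
by rewrite spos_pn ?oppr_gt0 ?oppr_lt0 // !abszN.
Qed.

Lemma part4 n k r (w : seq int) a b : (1 <= k)%N -> (k < n)%N -> (r <= k)%N ->
  WF n k r (fun i => nth 0 w i.-1) -> (1 <= a)%N -> (a < b)%N -> (b <= k)%N ->
  ((2 * n + 1 - 2 * k < count (Inv n w) (base_row n k (k.+1 - a)) +
                         count (Inv n w) (base_row n k (k.+1 - b)))%N -> Inv n w (e n a + e n b)) /\
  ((count (Inv n w) (base_row n k (k.+1 - a)) +
    count (Inv n w) (base_row n k (k.+1 - b)) < 2 * n + 1 - 2 * k)%N -> ~~ Inv n w (e n a + e n b)).
Proof.
move=> hk1 hkn hr hw ha hab hbk.
have hsz p : (count p (iota k.+1 (n - k)) <= n - k)%N.
  by rewrite -[X in (_ <= X)%N](size_iota k.+1) count_size.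
rewrite Inv_p; try side hw.
case: (leqP a (k - r)) => hay; case: (leqP b (k - r)) => hby.
- have xa : 0 < nth 0 w a.-1 by apply: (wf_Y hw); lia.
  have xb : 0 < nth 0 w b.-1 by apply: (wf_Y hw); lia.
  rewrite spos_nn ?oppr_lt0 //.
  rewrite (rowY _ _ _ _ a hk1 hkn hr hw) ?(rowY _ _ _ _ b hk1 hkn hr hw); try lia.
  move: (hsz (fun v => absz (nth 0%R w v.-1) < absz (nth 0%R w a.-1))%N)
        (hsz (fun v => absz (nth 0%R w v.-1) < absz (nth 0%R w b.-1))%N).
  clear -hk1 hkn; lia.
- have xa : 0 < nth 0 w a.-1 by apply: (wf_Y hw); lia.
  have xb : nth 0 w b.-1 < 0 by apply: (wf_Z hw); lia.
  rewrite spos_np ?oppr_lt0 ?oppr_gt0 // !abszN.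
  rewrite (rowY _ _ _ _ a hk1 hkn hr hw) ?(rowZ _ _ _ _ b hk1 hkn hr hw); try lia.
  set c1 := count _ _; set c2 := count _ _.
  have := wf_dist hw a b; have := wf_abs hw a; have := wf_abs hw b; move=> /= _ _ hd.
  case: (ltngtP (absz (nth 0%R w b.-1)) (absz (nth 0%R w a.-1))) => hc.
  + have : (n - k <= c1 + c2)%N.
      rewrite -[X in (X <= _)%N](size_iota k.+1); apply: cnt_cover => v _ /=.
      by case: ltnP => //= h; apply: leq_trans hc h.
    move=> h; split => h' //; exfalso; clear -h h' hkn; lia.
  + have : (c1 + c2 <= n - k)%N.
      rewrite -[X in (_ <= X)%N](size_iota k.+1); apply: cnt_disj => v _ /=.
      by apply/negP => /andP [h1 h2]; move: (ltn_trans h1 (ltn_trans hc h2)); rewrite ltnn.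
    move=> h; split => h' //; exfalso; clear -h h' hkn; lia.
  + exfalso; have H : (absz (nth 0%R w a.-1) != absz (nth 0%R w b.-1)) by apply: hd; lia.
    by rewrite hc eqxx in H.
- lia.
- have xa : nth 0 w a.-1 < 0 by apply: (wf_Z hw); lia.
  have xb : nth 0 w b.-1 < 0 by apply: (wf_Z hw); lia.
  rewrite spos_pp ?oppr_gt0 //.
  rewrite (rowZ _ _ _ _ a hk1 hkn hr hw) ?(rowZ _ _ _ _ b hk1 hkn hr hw); try lia.
Qed.

Ltac getP hP m h := have h := hP m; rewrite ?P_add ?P_opp ?P_e in h; [| lia ..].

Lemma part3 n k r (w : seq int) : (1 <= k)%N -> (k < n)%N -> (r <= k)%N ->
  WF n k r (fun i => nth 0 w i.-1) -> lower_ideal_in n (top_region n k) (Inv n w).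
Proof.
move=> hk1 hkn hr hw al be hal hbe hle hI.
have hP := root_le_P _ _ _ hle.
move: hal hbe => /allpairsPdep [a [b [ha hb E1]]] /allpairsPdep [a' [b' [ha' hb' E]]].
subst al be; move: ha hb ha' hb'; rewrite !mem_iota => ha hb ha' hb'.
getP hP a h1; getP hP b h2.
have {h1 h2} [haa hbb] : (a' <= a)%N /\ (b' <= b)%N by lia.
rewrite Inv_p in hI; try side hw.
rewrite Inv_p; try side hw.
case: (leqP b (k - r)) => hbY.
  have xa' : 0 < nth 0 w a'.-1 by apply: (wf_Y hw); lia.
  have xb' : 0 < nth 0 w b'.-1 by apply: (wf_Y hw); lia.
  by rewrite spos_nn ?oppr_lt0 in hI.
have xb : nth 0 w b.-1 < 0 by apply: (wf_Z hw); lia.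
case: (leqP a (k - r)) => haY; last first.
  have xa : nth 0 w a.-1 < 0 by apply: (wf_Z hw); lia.
  by rewrite spos_pp ?oppr_gt0.
have xa : 0 < nth 0 w a.-1 by apply: (wf_Y hw); lia.
have xa' : 0 < nth 0 w a'.-1 by apply: (wf_Y hw); lia.
case: (leqP b' (k - r)) => hb'Y.
  have xb' : 0 < nth 0 w b'.-1 by apply: (wf_Y hw); lia.
  by rewrite spos_nn ?oppr_lt0 in hI.
have xb' : nth 0 w b'.-1 < 0 by apply: (wf_Z hw); lia.
rewrite spos_np ?oppr_lt0 ?oppr_gt0 // !abszN.
rewrite spos_np ?oppr_lt0 ?oppr_gt0 // !abszN in hI.
have m1 : nth 0 w a'.-1 <= nth 0 w a.-1.
  case: (ltngtP a' a) => h; last by rewrite h.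
  - by apply/ltW/(wf_Ym hw); lia.
  - lia.
have m2 : (absz (nth 0%R w b.-1) <= absz (nth 0%R w b'.-1))%N.
  case: (ltngtP b' b) => h; last by rewrite h.
  - by apply/ltnW/(wf_Zm hw); lia.
  - lia.
clear -m1 m2 hI xa xa' xb xb'; lia.
Qed.

Lemma part2 n k r (w : seq int) : (1 <= k)%N -> (k < n)%N -> (r <= k)%N ->
  WF n k r (fun i => nth 0 w i.-1) -> lower_ideal_in n (base_region n k) (Inv n w).
Proof.
move=> hk1 hkn hr hw al be hal hbe hle hI.
have hP := root_le_P _ _ _ hle.
have sgZ i : (1 <= i <= k)%N -> nth 0 w i.-1 < 0 -> (k - r < i)%N.
  move=> hi hx; case: (leqP i (k - r)) => // h.
  by have := wf_Y hw i; move=> /= /(_ _) H; move: hx; rewrite ltNge ltW //; apply: H; lia.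
have negZ i : (k - r < i <= k)%N -> nth 0 w i.-1 < 0 by move=> hi; apply: (wf_Z hw).
have posY i : (1 <= i <= k - r)%N -> 0 < nth 0 w i.-1 by move=> hi; apply: (wf_Y hw).
have posV i : (k < i <= n)%N -> 0 < nth 0 w i.-1 by move=> hi; apply: (wf_V hw).
rewrite /base_region !mem_cat in hal hbe.
case/or3P: hal => [/allpairsPdep [a [b [ha hb E1]]] | /allpairsPdep [a [b [ha hb E1]]] | /mapP [a ha E1]];
case/or3P: hbe => [/allpairsPdep [a' [b' [ha' hb' E]]] | /allpairsPdep [a' [b' [ha' hb' E]]] | /mapP [a' ha' E]];
subst al be; rewrite ?mem_iota in ha ha'; try rewrite ?mem_iota in hb; try rewrite ?mem_iota in hb'.
-
  getP hP a h1; getP hP b' h2.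
  have {h1 h2} [haa hbb] : (a' <= a)%N /\ (b <= b')%N by lia.
  rewrite Inv_m in hI; try side hw.
  rewrite Inv_m; try side hw.
  have xb := posV b ltac:(lia); have xb' := posV b' ltac:(lia).
  case: (leqP a (k - r)) => haY; last first.
    by rewrite spos_pp ?oppr_gt0 //; apply: negZ; lia.
  have xa := posY a ltac:(lia); have xa' := posY a' ltac:(lia).
  rewrite spos_np ?oppr_lt0 // abszN.
  rewrite spos_np ?oppr_lt0 // abszN in hI.
  have m1 : nth 0 w a'.-1 <= nth 0 w a.-1.
    case: (ltngtP a' a) => h; last by rewrite h.
    - by apply/ltW/(wf_Ym hw); lia.
    - lia.
  have m2 : nth 0 w b.-1 <= nth 0 w b'.-1.
    case: (ltngtP b b') => h; last by rewrite h.
    - by apply/ltW/(wf_Vm hw); lia.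
    - lia.
  clear -m1 m2 hI xa xa' xb xb'; lia.
-
  getP hP a h1.
  have {h1} haa : (a' <= a)%N by lia.
  rewrite Inv_p in hI; try side hw.
  rewrite Inv_m; try side hw.
  have xb := posV b ltac:(lia); have xb' := posV b' ltac:(lia).
  case: (leqP a' (k - r)) => ha'Y.
    have xa' := posY a' ltac:(lia).
    by rewrite spos_nn ?oppr_lt0 in hI.
  by rewrite spos_pp ?oppr_gt0 //; apply: negZ; lia.
-
  getP hP a h1.
  have {h1} haa : (a' <= a)%N by lia.
  rewrite Inv_e in hI; try side hw.
  rewrite Inv_m; try side hw.
  have xb := posV b ltac:(lia).
  have := sgZ a' ltac:(lia) hI => ha'Z.
  by rewrite spos_pp ?oppr_gt0 //; apply: negZ; lia.
-
  getP hP n h1; exfalso; lia.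
-
  getP hP a h1; getP hP b h2.
  have {h1 h2} [haa hbb] : (a' <= a)%N /\ (b' <= b)%N by lia.
  rewrite Inv_p in hI; try side hw.
  rewrite Inv_p; try side hw.
  have xb := posV b ltac:(lia); have xb' := posV b' ltac:(lia).
  case: (leqP a' (k - r)) => ha'Y.
    have xa' := posY a' ltac:(lia).
    by rewrite spos_nn ?oppr_lt0 in hI.
  have xa' := negZ a' ltac:(lia); have xa := negZ a ltac:(lia).
  rewrite spos_pn ?oppr_lt0 ?oppr_gt0 // !abszN.
  rewrite spos_pn ?oppr_lt0 ?oppr_gt0 // !abszN in hI.
  have m1 : (absz (nth 0%R w a.-1) <= absz (nth 0%R w a'.-1))%N.
    case: (ltngtP a' a) => h; last by rewrite h.
    - by apply/ltnW/(wf_Zm hw); lia.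
    - lia.
  have m2 : nth 0 w b'.-1 <= nth 0 w b.-1.
    case: (ltngtP b' b) => h; last by rewrite h.
    - by apply/ltW/(wf_Vm hw); lia.
    - lia.
  clear -m1 m2 hI xa xa' xb xb'; lia.
-
  getP hP n h1; exfalso; lia.
-
  getP hP n h1; exfalso; lia.
-
  getP hP a h1.
  have {h1} haa : (a' <= a)%N by lia.
  rewrite Inv_p in hI; try side hw.
  rewrite Inv_e; try side hw.
  have xb' := posV b' ltac:(lia).
  case: (leqP a' (k - r)) => ha'Y.
    have xa' := posY a' ltac:(lia).
    by rewrite spos_nn ?oppr_lt0 in hI.
  by apply: negZ; lia.
-
  getP hP a h1.
  have {h1} haa : (a' <= a)%N by lia.
  rewrite Inv_e in hI; try side hw.
  rewrite Inv_e; try side hw.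
  have := sgZ a' ltac:(lia) hI => ha'Z.
  by apply: negZ; lia.
Qed.
Local Close Scope ring_scope.

Theorem lemma3p5 (n k : nat) (hk1 : (1 <= k)%N) (hkn : (k < n)%N) (w : seq int) :
  in_W_OG n k w -> W_OG_diagram n k (Inv n w).
Proof.
move=> hW; have [r [hr hw]] := W_WF n k w (ltnW hkn) hW.
split.
- exact: (part1 n k r w hk1 hkn hr hw).
- exact: (part2 n k r w hk1 hkn hr hw).
- exact: (part3 n k r w hk1 hkn hr hw).
- move=> a b h1 h2 h3.
  exact: (part4 n k r w a b hk1 hkn hr hw h1 h2 h3).
Qed.
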